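(* A real number $\alpha$ has a primitive recursive nested interval representation if and only if it admits a primitive recursive approximation.
   Context: $\mathbb{N}=\{0,1,2,\dots\}$. $\mathfrak{PR}$ denotes the primitive recursive functions $\mathbb{N}^n\to\mathbb{N}$. A $\mathfrak{PR}$-sequence is a function $A:\mathbb{N}\to\mathbb{Q}$ of the form $A(x)=\frac{f(x)-g(x)}{h(x)+1}$ with $f,g,h:\mathbb{N}\to\mathbb{N}$ primitive recursive. A primitive recursive approximation of $\alpha$ is a pair $(A,E)$ of $\mathfrak{PR}$-sequences such that $E$ is monotonically decreasing to $0$ and $|A(x)-\alpha|\le E(x)$ for all $x$. A primitive recursive nested interval representation of $\alpha$ is a pair of $\mathfrak{PR}$-sequences $f,g:\mathbb{N}\to\mathbb{Q}$ with $f(x)\le f(x+1)\le\alpha\le g(x+1)\le g(x)$ for all $x$ and $\lim_{x\to\infty}(g(x)-f(x))=0$. *)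

(* Defs.v *)
From Stdlib Require Import Reals.
From Stdlib Require Fin.
Open Scope R_scope.

Inductive PRF : nat -> Type :=
| PR_zero : forall n : nat, PRF n
| PR_succ : PRF 1
| PR_proj : forall n : nat, Fin.t n -> PRF n
| PR_comp : forall n m : nat, PRF m -> (Fin.t m -> PRF n) -> PRF n
| PR_rec  : forall n : nat, PRF n -> PRF (S (S n)) -> PRF (S n).

Definition fcons {n : nat} (a : nat) (v : Fin.t n -> nat) : Fin.t (S n) -> nat :=
  fun i => Fin.caseS' i (fun _ => nat) a v.

(* Semantics. For PR_rec g h: F(0, xs) = g xs, F(y+1, xs) = h(y, F(y, xs), xs). *)
Fixpoint PReval {n : nat} (p : PRF n) : (Fin.t n -> nat) -> nat :=
  match p in PRF n return (Fin.t n -> nat) -> nat with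
  | PR_zero _ => fun _ => 0%nat
  | PR_succ => fun v => S (v Fin.F1)
  | PR_proj _ i => fun v => v i
  | PR_comp _ _ f gs => fun v => PReval f (fun j => PReval (gs j) v)
  | PR_rec _ g h => fun v =>
      let xs := fun i => v (Fin.FS i) in
      nat_rect (fun _ => nat) (PReval g xs)
        (fun k acc => PReval h (fcons k (fcons acc xs))) (v Fin.F1)
  end.

Definition is_PR1 (f : nat -> nat) : Prop :=
  exists p : PRF 1, forall x : nat, PReval p (fun _ => x) = f x.

(* A PR-sequence: A(x) = (f(x) - g(x)) / (h(x) + 1) with f, g, h primitive
   recursive; the value is a rational number, viewed here inside R. *)
Definition PR_sequence (A : nat -> R) : Prop :=
  exists f g h : nat -> nat,
    is_PR1 f /\ is_PR1 g /\ is_PR1 h /\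
    forall x : nat, A x = (INR (f x) - INR (g x)) / (INR (h x) + 1).

Definition PR_approximation (alpha : R) : Prop :=
  exists A E : nat -> R,
    PR_sequence A /\ PR_sequence E /\
    (forall x : nat, E (S x) <= E x) /\ Un_cv E 0 /\
    (forall x : nat, Rabs (A x - alpha) <= E x).

Definition PR_nested_interval (alpha : R) : Prop :=
  exists f g : nat -> R,
    PR_sequence f /\ PR_sequence g /\
    (forall x : nat,
        f x <= f (S x) /\ f (S x) <= alpha /\ alpha <= g (S x) /\ g (S x) <= g x) /\
    Un_cv (fun x => g x - f x) 0.

(* Main.v *)
Require Import Defs.
From Stdlib Require Import Reals.
From Stdlib Require Import Lra Lia FunctionalExtensionality.
Open Scope R_scope.

Definition PRn (n : nat) (F : (Fin.t n -> nat) -> nat) : Prop :=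
  exists p : PRF n, forall v, PReval p v = F v.

Lemma PRn_ext n F G : PRn n F -> (forall v, F v = G v) -> PRn n G.
Proof. intros [p Hp] H. exists p. intro v. rewrite Hp. apply H. Qed.

Lemma fin1 (i : Fin.t 1) : i = Fin.F1.
Proof.
  apply (Fin.caseS' i (fun i => i = Fin.F1)); [reflexivity|].
  intro j. exact (Fin.case0 (fun j => Fin.FS j = Fin.F1) j).
Qed.

Lemma PR1_of_PRn f : PRn 1 (fun v => f (v Fin.F1)) -> is_PR1 f.
Proof. intros [p Hp]. exists p. intro x. rewrite Hp. reflexivity. Qed.

Lemma PRn_proj n i : PRn n (fun v => v i).
Proof. exists (PR_proj n i). reflexivity. Qed.

Lemma PRn_const n c : PRn n (fun _ => c).
Proof.
  induction c as [|c [p Hp]].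
  - exists (PR_zero n). reflexivity.
  - exists (PR_comp n 1 PR_succ (fun _ => p)). intro v. simpl. rewrite Hp. reflexivity.
Qed.

Lemma PRn_comp1 f n G : is_PR1 f -> PRn n G -> PRn n (fun v => f (G v)).
Proof.
  intros [pf Hf] [pg Hg]. exists (PR_comp n 1 pf (fun _ => pg)). intro v. simpl.
  rewrite <- Hf. rewrite Hg. reflexivity.
Qed.

Lemma PR1_S : is_PR1 S.
Proof. exists PR_succ. reflexivity. Qed.

Definition vec2 {A : Type} (a b : A) : Fin.t 2 -> A :=
  fun j => Fin.caseS' j (fun _ => A) a (fun _ => b).

Definition addP : PRF 2 :=
  PR_rec 1 (PR_proj 1 Fin.F1) (PR_comp 3 1 PR_succ (fun _ => PR_proj 3 (Fin.FS Fin.F1))).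

Lemma addP_spec w : PReval addP w = (w Fin.F1 + w (Fin.FS Fin.F1))%nat.
Proof. simpl. generalize (w Fin.F1). induction n; simpl; congruence. Qed.

Definition mulP : PRF 2 :=
  PR_rec 1 (PR_zero 1) (PR_comp 3 2 addP (vec2 (PR_proj 3 (Fin.FS Fin.F1)) (PR_proj 3 (Fin.FS (Fin.FS Fin.F1))))).

Lemma mulP_spec w : PReval mulP w = (w Fin.F1 * w (Fin.FS Fin.F1))%nat.
Proof. unfold mulP. cbn -[addP]. generalize (w Fin.F1). induction n; cbn -[addP]; [reflexivity|].
  rewrite addP_spec. cbn -[addP]. rewrite IHn. lia. Qed.

Definition predP : PRF 1 := PR_rec 0 (PR_zero 0) (PR_proj 2 Fin.F1).

Lemma predP_spec w : PReval predP w = Nat.pred (w Fin.F1).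
Proof. simpl. generalize (w Fin.F1). destruct n; reflexivity. Qed.

Definition subP : PRF 2 :=
  PR_rec 1 (PR_proj 1 Fin.F1) (PR_comp 3 1 predP (fun _ => PR_proj 3 (Fin.FS Fin.F1))).

Lemma subP_spec w : PReval subP w = (w (Fin.FS Fin.F1) - w Fin.F1)%nat.
Proof. unfold subP. cbn -[predP]. generalize (w Fin.F1). induction n; cbn -[predP]; [lia|].
  rewrite predP_spec. cbn -[predP]. rewrite IHn. lia. Qed.

Lemma PRn_add n F G : PRn n F -> PRn n G -> PRn n (fun v => (F v + G v)%nat).
Proof.
  intros [pf Hf] [pg Hg]. exists (PR_comp n 2 addP (vec2 pf pg)). intro v.
  cbn -[addP]. rewrite addP_spec. cbn. rewrite Hf, Hg. reflexivity.
Qed.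

Lemma PRn_mul n F G : PRn n F -> PRn n G -> PRn n (fun v => (F v * G v)%nat).
Proof.
  intros [pf Hf] [pg Hg]. exists (PR_comp n 2 mulP (vec2 pf pg)). intro v.
  cbn -[mulP]. rewrite mulP_spec. cbn. rewrite Hf, Hg. reflexivity.
Qed.

Lemma PRn_sub n F G : PRn n F -> PRn n G -> PRn n (fun v => (F v - G v)%nat).
Proof.
  intros [pf Hf] [pg Hg]. exists (PR_comp n 2 subP (vec2 pg pf)). intro v.
  cbn -[subP]. rewrite subP_spec. cbn. rewrite Hf, Hg. reflexivity.
Qed.

Lemma PRn_rec n G H : PRn n G -> PRn (S (S n)) H ->
  PRn (S n) (fun v => nat_rect (fun _ => nat) (G (fun i => v (Fin.FS i)))
     (fun k acc => H (fcons k (fcons acc (fun i => v (Fin.FS i))))) (v Fin.F1)).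
Proof.
  intros [pg Hg] [ph Hh]. exists (PR_rec n pg ph). intro v. simpl.
  rewrite Hg. generalize (v Fin.F1). induction n0; simpl; congruence.
Qed.

Ltac prauto := repeat (first [ apply PRn_proj | apply PRn_const | apply PRn_add
   | apply PRn_mul | apply PRn_sub
   | (apply PRn_comp1; [first [assumption | exact PR1_S] | ]) ]).

Definition val (p q r : nat -> nat) (z : nat) : R :=
  (INR (p z) - INR (q z)) / (INR (r z) + 1).

Lemma den_pos (n : nat) : INR n + 1 <> 0.
Proof. pose proof (pos_INR n). lra. Qed.

Lemma val_sub p1 q1 r1 p2 q2 r2 x :
  val p1 q1 r1 x - val p2 q2 r2 x =
  val (fun z => p1 z * (r2 z + 1) + q2 z * (r1 z + 1))%nat
      (fun z => q1 z * (r2 z + 1) + p2 z * (r1 z + 1))%nat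
      (fun z => r1 z * r2 z + r1 z + r2 z)%nat x.
Proof.
  unfold val. rewrite !plus_INR, !mult_INR, !plus_INR. simpl (INR 1).
  pose proof (den_pos (r1 x)). pose proof (den_pos (r2 x)).
  pose proof (pos_INR (r1 x)). pose proof (pos_INR (r2 x)).
  field. split; [|split]; try assumption. nra.
Qed.

Lemma val_add p1 q1 r1 p2 q2 r2 x :
  val p1 q1 r1 x + val p2 q2 r2 x =
  val (fun z => p1 z * (r2 z + 1) + p2 z * (r1 z + 1))%nat
      (fun z => q1 z * (r2 z + 1) + q2 z * (r1 z + 1))%nat
      (fun z => r1 z * r2 z + r1 z + r2 z)%nat x.
Proof.
  unfold val. rewrite !plus_INR, !mult_INR, !plus_INR. simpl (INR 1).
  pose proof (den_pos (r1 x)). pose proof (den_pos (r2 x)).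
  pose proof (pos_INR (r1 x)). pose proof (pos_INR (r2 x)).
  field. split; [|split]; try assumption. nra.
Qed.

Lemma val_neg p q r x : val q p r x = - val p q r x.
Proof. unfold val. pose proof (den_pos (r x)). field. assumption. Qed.

Definition Xf (p q r : nat -> nat) u a := (p u * (r a + 1) + q a * (r u + 1))%nat.
Definition Yf (p q r : nat -> nat) u a := (p a * (r u + 1) + q u * (r a + 1))%nat.
Definition cf p q r k a := (1 - (1 - (Xf p q r (S k) a - Yf p q r (S k) a)))%nat.
Definition hf p q r k a := (cf p q r k a * S k + (1 - cf p q r k a) * a)%nat.
Definition argm p q r x := nat_rect (fun _ => nat) 0%nat (fun k acc => hf p q r k acc) x.

Lemma val_cmp p q r u a :
  val p q r u - val p q r a =
  (INR (Xf p q r u a) - INR (Yf p q r u a)) / ((INR (r u) + 1) * (INR (r a) + 1)).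
Proof.
  unfold val, Xf, Yf. rewrite !plus_INR, !mult_INR, !plus_INR. simpl (INR 1).
  pose proof (den_pos (r u)). pose proof (den_pos (r a)).
  field. split; assumption.
Qed.

Lemma hf_spec p q r k a :
  hf p q r k a = if Nat.ltb (Yf p q r (S k) a) (Xf p q r (S k) a) then S k else a.
Proof.
  unfold hf, cf. set (X := Xf p q r (S k) a). set (Y := Yf p q r (S k) a).
  destruct (Nat.ltb_spec Y X).
  - replace (1 - (1 - (X - Y)))%nat with 1%nat by lia. lia.
  - replace (1 - (1 - (X - Y)))%nat with 0%nat by lia. lia.
Qed.

Lemma argm_PR p q r : is_PR1 p -> is_PR1 q -> is_PR1 r -> is_PR1 (argm p q r).
Proof.
  intros Hp Hq Hr.
  assert (H : PRn 2 (fun v => hf p q r (v Fin.F1) (v (Fin.FS Fin.F1)))).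
  { unfold hf, cf, Xf, Yf. prauto. }
  pose proof (PRn_rec 0 (fun _ => 0%nat) _ (PRn_const 0 0) H) as H2.
  apply PR1_of_PRn. eapply PRn_ext; [exact H2|]. intro v. reflexivity.
Qed.

Lemma argm_step p q r y :
  val p q r (argm p q r (S y)) >= val p q r (argm p q r y) /\
  val p q r (argm p q r (S y)) >= val p q r (S y).
Proof.
  change (argm p q r (S y)) with (hf p q r y (argm p q r y)).
  rewrite hf_spec. set (m := argm p q r y).
  pose proof (val_cmp p q r (S y) m) as Hc.
  pose proof (den_pos (r (S y))). pose proof (den_pos (r m)).
  pose proof (pos_INR (r (S y))). pose proof (pos_INR (r m)).
  assert (Hd : 0 < (INR (r (S y)) + 1) * (INR (r m) + 1)) by nra.
  destruct (Nat.ltb_spec (Yf p q r (S y) m) (Xf p q r (S y) m)) as [Hl|Hl].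
  - apply lt_INR in Hl.
    assert (0 < (INR (Xf p q r (S y) m) - INR (Yf p q r (S y) m)) /
               ((INR (r (S y)) + 1) * (INR (r m) + 1))).
    { apply Rdiv_lt_0_compat; lra. }
    lra.
  - apply le_INR in Hl.
    assert ((INR (Xf p q r (S y) m) - INR (Yf p q r (S y) m)) /
               ((INR (r (S y)) + 1) * (INR (r m) + 1)) <= 0).
    { unfold Rdiv. assert (0 < / ((INR (r (S y)) + 1) * (INR (r m) + 1))) by (apply Rinv_0_lt_compat; lra). nra. }
    lra.
Qed.

Lemma argm_ge p q r x : val p q r (argm p q r x) >= val p q r x.
Proof. destruct x. - simpl. lra. - apply argm_step. Qed.

Lemma PR1_comp f g : is_PR1 f -> is_PR1 g -> is_PR1 (fun x => f (g x)).
Proof. intros. apply PR1_of_PRn. prauto. Qed.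

Lemma abs_bnd a b : Rabs a <= b -> - b <= a <= b.
Proof. unfold Rabs. destruct (Rcase_abs a); lra. Qed.

Theorem mainTheorem19 (alpha : R) :
  PR_nested_interval alpha <-> PR_approximation alpha.
Proof.
  split.
  - intros [f [g [Hf [Hg [Hn Hcv]]]]].
    destruct Hf as (f1 & f2 & f3 & P1 & P2 & P3 & Hfe).
    destruct Hg as (g1 & g2 & g3 & Q1 & Q2 & Q3 & Hge).
    exists f, (fun x => g x - f x). split; [|split; [|split; [|split]]].
    + exists f1, f2, f3. auto.
    + exists (fun z => g1 z * (f3 z + 1) + f2 z * (g3 z + 1))%nat,
             (fun z => g2 z * (f3 z + 1) + f1 z * (g3 z + 1))%nat,
             (fun z => g3 z * f3 z + g3 z + f3 z)%nat.
      split; [|split; [|split]].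
      * apply PR1_of_PRn. prauto.
      * apply PR1_of_PRn. prauto.
      * apply PR1_of_PRn. prauto.
      * intro x. rewrite Hfe, Hge. apply (val_sub g1 g2 g3 f1 f2 f3 x).
    + intro x. destruct (Hn x) as (? & ? & ? & ?). lra.
    + exact Hcv.
    + intro x. destruct (Hn x) as (? & ? & ? & ?).
      rewrite Rabs_left1; lra.
  - intros [A [E [HA [HE [Hmono [Hcv Habs]]]]]].
    destruct HA as (a1 & a2 & a3 & Pa1 & Pa2 & Pa3 & HAe).
    destruct HE as (e1 & e2 & e3 & Pe1 & Pe2 & Pe3 & HEe).
    set (pL := fun z => (a1 z * (e3 z + 1) + e2 z * (a3 z + 1))%nat).
    set (qL := fun z => (a2 z * (e3 z + 1) + e1 z * (a3 z + 1))%nat).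
    set (rL := fun z => (a3 z * e3 z + a3 z + e3 z)%nat).
    set (pU := fun z => (a1 z * (e3 z + 1) + e1 z * (a3 z + 1))%nat).
    set (qU := fun z => (a2 z * (e3 z + 1) + e2 z * (a3 z + 1))%nat).
    assert (HL : forall z, A z - E z = val pL qL rL z).
    { intro z. rewrite HAe, HEe. apply (val_sub a1 a2 a3 e1 e2 e3 z). }
    assert (HU : forall z, A z + E z = val pU qU rL z).
    { intro z. rewrite HAe, HEe. apply (val_add a1 a2 a3 e1 e2 e3 z). }
    assert (PpL : is_PR1 pL) by (apply PR1_of_PRn; unfold pL; prauto).
    assert (PqL : is_PR1 qL) by (apply PR1_of_PRn; unfold qL; prauto).
    assert (PrL : is_PR1 rL) by (apply PR1_of_PRn; unfold rL; prauto).
    assert (PpU : is_PR1 pU) by (apply PR1_of_PRn; unfold pU; prauto).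
    assert (PqU : is_PR1 qU) by (apply PR1_of_PRn; unfold qU; prauto).
    set (m := argm pL qL rL). set (m' := argm qU pU rL).
    assert (Pm : is_PR1 m) by (apply argm_PR; assumption).
    assert (Pm' : is_PR1 m') by (apply argm_PR; assumption).
    assert (Hb : forall z, A z - E z <= alpha <= A z + E z).
    { intro z. pose proof (abs_bnd _ _ (Habs z)). lra. }
    assert (Hfa : forall x, val pL qL rL (m x) <= alpha).
    { intro x. rewrite <- HL. apply Hb. }
    assert (Hga : forall x, alpha <= val pU qU rL (m' x)).
    { intro x. rewrite <- HU. apply Hb. }
    assert (Hgneg : forall z, val pU qU rL z = - val qU pU rL z).
    { intro z. rewrite (val_neg qU pU rL z). lra. }
    exists (fun x => val pL qL rL (m x)), (fun x => val pU qU rL (m' x)).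
    split; [|split; [|split]].
    + exists (fun x => pL (m x)), (fun x => qL (m x)), (fun x => rL (m x)).
      split; [apply PR1_comp; assumption|].
      split; [apply PR1_comp; assumption|].
      split; [apply PR1_comp; assumption|].
      intro x. reflexivity.
    + exists (fun x => pU (m' x)), (fun x => qU (m' x)), (fun x => rL (m' x)).
      split; [apply PR1_comp; assumption|].
      split; [apply PR1_comp; assumption|].
      split; [apply PR1_comp; assumption|].
      intro x. reflexivity.
    + intro x. destruct (argm_step pL qL rL x) as [H1 _].
      destruct (argm_step qU pU rL x) as [H2 _].
      fold m in H1. fold m' in H2.
      rewrite !Hgneg. repeat split; try lra.
      * apply Hfa.
      * pose proof (Hga (S x)). rewrite Hgneg in H. exact H.
    + intros eps Heps. destruct (Hcv (eps / 2)) as [N HN]; [lra|].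
      exists N. intros n Hn. specialize (HN n Hn). unfold R_dist in *.
      pose proof (argm_ge pL qL rL n) as G1. pose proof (argm_ge qU pU rL n) as G2.
      fold m in G1. fold m' in G2.
      pose proof (HL n). pose proof (HU n). pose proof (Hgneg n). pose proof (Hgneg (m' n)).
      pose proof (Hfa n). pose proof (Hga n).
      rewrite Rminus_0_r in HN. pose proof (Rle_abs (E n)).
      pose proof (Hb n).
      rewrite Rminus_0_r. rewrite Rabs_right; lra.
Qed.
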